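(* Let $p$ be an odd prime, $\gamma\ge1$, $0\le\rho\le\gamma$, and \[G=\langle a,b:[a,b]^{p^\gamma}=[a,b,a]=[a,b,b]=1,\ a^{p^\gamma}=[a,b]^{p^\rho},\ b^{p^\gamma}=1\rangle.\] Let $1\le\delta\le\gamma$. Then (1) $\langle a^{p^\delta},b^{p^\delta},[a,b]\rangle/\langle[a,b]^{p^\delta}\rangle\cong C_{p^{\gamma-\rho}}\times C_{p^{\gamma-\delta}}\times C_{p^\rho}$ if $\rho<\delta<\gamma-\rho$, and $\cong C_{p^{\gamma-\delta}}\times C_{p^{\gamma-\delta}}\times C_{p^\delta}$ otherwise; (2) $\langle a^{p^\delta},b^{p^\delta},[a,b]\rangle/\langle[a,b]^{p^{\delta-1}}\rangle\cong C_{p^{\gamma-\rho-1}}\times C_{p^{\gamma-\delta}}\times C_{p^\rho}$ if $\rho<\delta<\gamma-\rho$, and $\cong C_{p^{\gamma-\delta}}\times C_{p^{\gamma-\delta}}\times C_{p^{\delta-1}}$ otherwise.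
   Context: $[g,h]=g^{-1}h^{-1}gh$, $[x,y,z]=[[x,y],z]$; $C_m$ is the cyclic group of order $m$. (This group is the two-generator $p$-group of class 2 and order $p^{3\gamma}$ with parameters $(\alpha,\beta,\gamma;\rho,\sigma)=(\gamma,\gamma,\gamma;\rho,\gamma)$.) *)

(* Defs.v *)
From mathcomp Require Import all_boot all_order all_algebra all_fingroup all_solvable.
Set Implicit Arguments. Unset Strict Implicit. Unset Printing Implicit Defensive.

(* The external direct product C_m x C_n x C_k of cyclic groups of orders
   m, n, k (m, n, k >= 1): Zp m is the cyclic group of order m inside 'Z_m
   (it is all of 'Z_m when m > 1, and the trivial group when m = 1). *)
Definition C3 (m n k : nat) : {set ('Z_m * 'Z_n * 'Z_k)%type} :=
  setX (setX (Zp m) (Zp n)) (Zp k).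

(* Main.v *)
Require Import Defs.
From mathcomp Require Import all_boot all_order all_algebra all_fingroup all_solvable.
From mathcomp Require Import zify.
Set Implicit Arguments. Unset Strict Implicit. Unset Printing Implicit Defensive.
Local Open Scope group_scope.
Lemma valZpM m (i j : 'Z_m) : val (i * j) = ((val i + val j) %% (Zp_trunc m).+2)%N.
Proof. by []. Qed.

Lemma expZp (qT : finGroupType) (u : qT) m : (0 < m)%N -> u ^+ m = 1 ->
  u ^+ (Zp_trunc m).+2 = 1.
Proof.
move=> m0 um; have [m1|m1] := eqVneq m 1%N.
  by move: um; rewrite m1 expg1 => ->; rewrite expg1n.
by rewrite Zp_cast // ltn_neqAle eq_sym m1 m0.
Qed.

Lemma abel3_isog (qT : finGroupType) (Q : {group qT}) (u v w : qT) m n k :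
  (0 < m)%N -> (0 < n)%N -> (0 < k)%N ->
  u ^+ m = 1 -> v ^+ n = 1 -> w ^+ k = 1 ->
  commute u v -> commute u w -> commute v w ->
  u \in Q -> v \in Q -> w \in Q -> Q \subset <<[set u; v; w]>> ->
  (m * n * k <= #|Q|)%N -> Q \isog C3 m n k.
Proof.
move=> m0 n0 k0 um vn wk cuv cuw cvw uQ vQ wQ sQ leQ.
pose f (t : 'Z_m * 'Z_n * 'Z_k) := u ^+ val t.1.1 * v ^+ val t.1.2 * w ^+ val t.2.
have um' := expZp m0 um; have vn' := expZp n0 vn; have wk' := expZp k0 wk.
have fM : {in C3 m n k &, {morph f : s t / s * t}}.
  move=> [[i j] l] [[i' j'] l'] _ _; rewrite /f /=.
  rewrite (expg_mod _ um') (expg_mod _ vn') (expg_mod _ wk') !expgD.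
  have c1 := commuteX2 l i' (commute_sym cuw).
  have c2 := commuteX2 j i' (commute_sym cuv).
  have c3 := commuteX2 l j' (commute_sym cvw).
  rewrite !mulgA; congr (_ * _).
  rewrite -(mulgA _ (w ^+ l)) c1 mulgA -(mulgA _ (w ^+ l)) c3 mulgA.
  by rewrite -(mulgA (u ^+ i) (u ^+ i')) -c2 mulgA.
pose fm := Morphism fM.
have sQf : Q \subset fm @* C3 m n k.
  apply: subset_trans sQ _; rewrite gen_subG !subUset !sub1set.
  have inC t : t.1.1 \in Zp m -> t.1.2 \in Zp n -> t.2 \in Zp k -> t \in C3 m n k.
    by case: t => [[i j] l] /= *; rewrite /C3 !inE /=; apply/andP; split => //; apply/andP.
  have gt1 r : r != 1%N -> (0 < r)%N -> (1 < r)%N by move=> r1 r0; rewrite ltn_neqAle eq_sym r1 r0.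
  have ZpT r : (1 < r)%N -> Zp r = [set: 'Z_r] by rewrite /Zp => ->.
  apply/andP; split; [apply/andP; split|].
  - have [m1|m1] := eqVneq m 1%N.
      by have -> : u = 1 by move: um; rewrite m1 expg1.
    have -> : u = fm (inZp 1, 1, 1) by rewrite /= /f /= !mulg1 (expg_mod _ um') expg1.
    by apply: mem_morphim; apply: inC; rewrite /= ?group1 // ZpT ?inE ?gt1.
  - have [n1|n1] := eqVneq n 1%N.
      by have -> : v = 1 by move: vn; rewrite n1 expg1.
    have -> : v = fm (1, inZp 1, 1) by rewrite /= /f /= mulg1 mul1g (expg_mod _ vn') expg1.
    by apply: mem_morphim; apply: inC; rewrite /= ?group1 // ZpT ?inE ?gt1.
  - have [k1|k1] := eqVneq k 1%N.
      by have -> : w = 1 by move: wk; rewrite k1 expg1.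
    have -> : w = fm (1, 1, inZp 1) by rewrite /= /f /= !mul1g (expg_mod _ wk') expg1.
    by apply: mem_morphim; apply: inC; rewrite /= ?group1 // ZpT ?inE ?gt1.
have cardC : #|C3 m n k| = (m * n * k)%N by rewrite /C3 !cardsX !card_Zp.
have eqQ : fm @* C3 m n k = Q.
  apply/esym/eqP; rewrite eqEcard sQf /=.
  by apply: leq_trans (leq_morphim _ _) _; rewrite cardC.
rewrite isog_sym; apply/isogP; exists fm => //.
rewrite -card_im_injm eqQ eqn_leq cardC leQ andbT -cardC -eqQ.
exact: leq_morphim.
Qed.

Lemma coset_commute (gT : finGroupType) (K : {group gT}) (g h : gT) :
  g \in 'N(K) -> h \in 'N(K) -> commute g h -> commute (coset K g) (coset K h).
Proof. by move=> gN hN cgh; rewrite /commute -!morphM // cgh. Qed.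

Lemma expE p gamma delta e : (e <= delta)%N -> (delta <= gamma)%N ->
  (p ^ (3 * gamma) = p ^ (gamma - e) * (p ^ delta * p ^ delta)
                              * p ^ (2 * gamma - 2 * delta + e))%N.
Proof.
move=> ed dg; rewrite -!expnD.
have -> : (3 * gamma = (gamma - e) + (delta + delta) + (2 * gamma - 2 * delta + e))%N.
  by lia.
by [].
Qed.

Lemma arith1 gamma rho delta e : (rho < delta)%N -> (delta < gamma - rho)%N ->
  (e <= delta)%N -> (delta <= e.+1)%N ->
  [/\ (gamma - rho - (delta - e) = (gamma - delta) + (e - rho))%N,
      (rho <= e)%N, (rho <= gamma - delta)%N &
      (gamma - rho - (delta - e) + (gamma - delta) + rho = 2 * gamma - 2 * delta + e)%N].
Proof. move=> *; split; lia. Qed.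

Lemma arith2 gamma rho delta : ~~ (rho < delta < gamma - rho)%N ->
  (rho < gamma - delta)%N -> (delta <= gamma)%N -> (delta <= rho)%N.
Proof. move=> /negP h *; apply/negP => h'; apply: h; apply/andP; split; lia. Qed.

Lemma arith3 gamma delta e : (e <= delta)%N -> (delta <= gamma)%N ->
  (gamma - delta + (gamma - delta) + e = 2 * gamma - 2 * delta + e)%N.
Proof. move=> *; lia. Qed.

Lemma main_e (gT : finGroupType) (p gamma rho delta e : nat) (a b : gT) :
  prime p -> (0 < gamma)%N -> (rho <= gamma)%N ->
  [~ a, b] ^+ (p ^ gamma) = 1 -> [~ a, b, a] = 1 -> [~ a, b, b] = 1 ->
  a ^+ (p ^ gamma) = [~ a, b] ^+ (p ^ rho) -> b ^+ (p ^ gamma) = 1 ->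
  #|<<[set a; b]>>| = (p ^ (3 * gamma))%N ->
  (1 <= delta <= gamma)%N -> (e <= delta)%N -> (delta <= e.+1)%N ->
  let H := <<[set a ^+ (p ^ delta); b ^+ (p ^ delta); [~ a, b]]>> in
  let K := <<[set [~ a, b] ^+ (p ^ e)]>> in
  ((rho < delta < gamma - rho)%N ->
        H / K \isog C3 (p ^ (gamma - rho - (delta - e))) (p ^ (gamma - delta)) (p ^ rho)) /\
  (~~ (rho < delta < gamma - rho)%N ->
        H / K \isog C3 (p ^ (gamma - delta)) (p ^ (gamma - delta)) (p ^ e)).
Proof.
move=> pr g0 rg cg cga cgb ag bg oG /andP[d1 dg] ed de H K.
have p0 := prime_gt0 pr.
set c := [~ a, b] in cg cga cgb ag *.
set G := <<[set a; b]>> in oG.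
have cca : commute c a by apply/commgP/eqP.
have ccb : commute c b by apply/commgP/eqP.
have cG : c \in 'C(G).
  rewrite -sub_cent1 gen_subG subUset !sub1set; apply/andP; split; apply/cent1P.
    exact: commute_sym.
  exact: commute_sym.
have aG : a \in G by rewrite mem_gen // !inE eqxx.
have bG : b \in G by rewrite mem_gen // !inE eqxx orbT.
have cGG : c \in G by rewrite groupR.
have aH : a ^+ (p ^ delta) \in H by rewrite mem_gen // !inE eqxx.
have bH : b ^+ (p ^ delta) \in H by rewrite mem_gen // !inE eqxx orbT.
have cH : c \in H by rewrite mem_gen // !inE eqxx !orbT.
have HG : H \subset G.
  by rewrite gen_subG !subUset !sub1set !groupX.
have KH : K \subset H by rewrite gen_subG sub1set groupX.
have cKH : H \subset 'C(K).
  rewrite centsC gen_subG sub1set groupX //.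
  exact: subsetP (centS HG) _ cG.
have nKH : H \subset 'N(K) by apply: cents_norm.
have oK : (#|K| <= p ^ (gamma - e))%N.
  have -> : #|K| = #[c ^+ (p ^ e)] by [].
  apply: dvdn_leq; first by rewrite expn_gt0 p0.
  by rewrite order_dvdn -expgM -expnD subnKC ?cg // (leq_trans ed dg).
have defG : <[a]> <*> <[b]> = G by rewrite joing_idl joing_idr.
have G'H : G^`(1) \subset H.
  by rewrite -defG der1_joing_cycles ?defG // cycle_subG.
have nHG : G \subset 'N(H) by apply: normal_norm; apply: sub_der1_normal.
have abGH : abelian (G / H) by apply: sub_der1_abelian.
have ordH (g : gT) : g \in G -> g ^+ (p ^ delta) \in H ->
    (#|<[coset H g]>| <= p ^ delta)%N.
  move=> gG gH; rewrite -orderE; apply: dvdn_leq; first by rewrite expn_gt0 p0.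
  have gN := subsetP nHG _ gG.
  by rewrite order_dvdn -morphX //= coset_id.
have oGH : (#|G / H| <= p ^ delta * p ^ delta)%N.
  have aN := subsetP nHG _ aG; have bN := subsetP nHG _ bG.
  rewrite -defG quotientY ?cycle_subG // !quotient_cycle //.
  rewrite comm_joingE; last first.
    apply: centC; apply: (sub_abelian_cent2 abGH); rewrite cycle_subG mem_quotient //.
  apply: leq_trans (_ : #|<[coset H a]>| * #|<[coset H b]>| <= _)%N.
    by rewrite mul_cardG leq_pmulr ?cardG_gt0.
  by apply: leq_mul; apply: ordH.
have oQ : (p ^ (2 * gamma - 2 * delta + e) <= #|H / K|)%N.
  have E : (p ^ (3 * gamma) = p ^ (gamma - e) * (p ^ delta * p ^ delta)
                              * p ^ (2 * gamma - 2 * delta + e))%N.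
    by apply: expE => //; apply: leq_trans ed dg.
  have L : (p ^ (3 * gamma) <= p ^ (gamma - e) * #|H / K| * (p ^ delta * p ^ delta))%N.
    rewrite -oG -(Lagrange HG) -(card_quotient nHG) -(Lagrange KH) -(card_quotient nKH).
    by apply: leq_mul => //; apply: leq_mul.
  by rewrite E (mulnAC (p ^ (gamma - e))%N #|_|) leq_pmul2l ?muln_gt0 ?expn_gt0 ?p0 in L.
set x := coset K (a ^+ (p ^ delta)).
set y := coset K (b ^+ (p ^ delta)).
set z := coset K c.
have aN := subsetP nKH _ aH; have bN := subsetP nKH _ bH; have cN := subsetP nKH _ cH.
have defQ : H / K = <<[set x; y; z]>>.
  rewrite /H quotient_gen; last by rewrite !subUset !sub1set aN bN cN.
  by rewrite !quotientU !quotient_set1.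
have xQ : x \in H / K by apply: mem_quotient.
have yQ : y \in H / K by apply: mem_quotient.
have zQ : z \in H / K by apply: mem_quotient.
have cxz : commute x z.
  by apply: coset_commute => //; apply: commute_sym; apply: commuteX; apply: commute_sym.
have cyz : commute y z.
  by apply: coset_commute => //; apply: commute_sym; apply: commuteX; apply: commute_sym.
have cxy : commute x y.
  apply/commgP; rewrite -morphR //= commXXg; try by apply: commute_sym.
  have -> : (p ^ delta * p ^ delta = p ^ e * p ^ (delta + delta - e))%N.
    by rewrite -!expnD subnKC // (leq_trans ed) // leq_addr.
  by rewrite expgM coset_id // groupX // mem_gen // inE.
have xr : x ^+ (p ^ (gamma - delta)) = z ^+ (p ^ rho).
  by rewrite -!morphX //= -expgM -expnD subnKC // ag.
have yr : y ^+ (p ^ (gamma - delta)) = 1.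
  by rewrite -!morphX //= -expgM -expnD subnKC // bg morph1.
have zr : z ^+ (p ^ e) = 1.
  by rewrite -!morphX //= coset_id // mem_gen // inE.
have pp n : (0 < p ^ n)%N by rewrite expn_gt0 p0.
split.
  case/andP=> rd dgr; have [A1 A2 A3 A4] := arith1 rd dgr ed de.
  pose w := z * (x ^+ (p ^ (gamma - delta - rho)))^-1.
  have czx : commute z (x ^+ (p ^ (gamma - delta - rho)))^-1.
    by apply: commuteV; apply: commuteX; apply: commute_sym.
  apply: (abel3_isog (u := x) (v := y) (w := w)) => //.
  - by rewrite A1 expnD expgM xr -expgM -expnD subnKC // zr.
  - by rewrite /w expgMn // expVgn -expgM -expnD subnK // xr mulgV.
  - by apply: commuteM => //; apply: commuteV; apply: commuteX; apply: commute_refl.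
  - apply: commuteM => //; apply: commuteV; apply: commuteX; exact: commute_sym.
  - by rewrite /w groupM ?groupV ?groupX.
  - apply: subset_trans (_ : H / K \subset <<[set x; y; z]>>) _; first by rewrite defQ.
    have g1 : x \in <<[set x; y; w]>> by rewrite mem_gen // !inE eqxx.
    have g2 : y \in <<[set x; y; w]>> by rewrite mem_gen // !inE eqxx ?orbT.
    have g3 : w \in <<[set x; y; w]>> by rewrite mem_gen // !inE eqxx ?orbT.
    rewrite gen_subG !subUset !sub1set g1 g2 /=.
    have -> : z = w * x ^+ (p ^ (gamma - delta - rho)) by rewrite /w mulgKV.
    by rewrite groupM ?groupX.
  - by rewrite -!expnD A4; exact: oQ.
move=> hn; case: (leqP (gamma - delta) rho) => h.
  pose u := x * (z ^+ (p ^ (rho - (gamma - delta))))^-1.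
  apply: (abel3_isog (u := u) (v := y) (w := z)) => //.
  - rewrite /u expgMn; last by apply: commuteV; apply: commuteX.
    by rewrite expVgn -expgM -expnD subnK // xr mulgV.
  - apply: commute_sym; apply: commuteM; first exact: commute_sym.
    by apply: commuteV; apply: commuteX.
  - apply: commute_sym; apply: commuteM; first exact: commute_sym.
    by apply: commuteV; apply: commuteX; apply: commute_refl.
  - by rewrite /u groupM ?groupV ?groupX.
  - apply: subset_trans (_ : H / K \subset <<[set x; y; z]>>) _; first by rewrite defQ.
    have g1 : u \in <<[set u; y; z]>> by rewrite mem_gen // !inE eqxx.
    have g2 : y \in <<[set u; y; z]>> by rewrite mem_gen // !inE eqxx ?orbT.
    have g3 : z \in <<[set u; y; z]>> by rewrite mem_gen // !inE eqxx ?orbT.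
    rewrite gen_subG !subUset !sub1set g2 g3 andbT.
    have -> : x = u * z ^+ (p ^ (rho - (gamma - delta))) by rewrite /u mulgKV.
    by rewrite groupM ?groupX.
  - by rewrite -!expnD arith3 //; exact: oQ.
have dr := arith2 hn h dg.
apply: (abel3_isog (u := x) (v := y) (w := z)) => //.
- rewrite xr; have -> : (p ^ rho = p ^ e * p ^ (rho - e))%N.
    by rewrite -expnD subnKC // (leq_trans ed dr).
  by rewrite expgM zr expg1n.
- by rewrite (_ : (_ / K)%G = H / K :> {set _}) // defQ.
- by rewrite -!expnD arith3 //; exact: oQ.
Qed.

Lemma sub_pred1 d : (0 < d)%N -> (d - d.-1 = 1)%N.
Proof. move=> *; lia. Qed.

Theorem lemma4p4 (gT : finGroupType) (p gamma rho delta : nat) (a b : gT) :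
  prime p -> odd p -> (0 < gamma)%N -> (rho <= gamma)%N ->
  (* G = <a, b> satisfies the defining relations ... *)
  [~ a, b] ^+ (p ^ gamma) = 1 -> [~ a, b, a] = 1 -> [~ a, b, b] = 1 ->
  a ^+ (p ^ gamma) = [~ a, b] ^+ (p ^ rho) -> b ^+ (p ^ gamma) = 1 ->
  (* ... and has the order p^(3 gamma) of the presented group, so G is the
     presented group with a, b its generators *)
  #|<<[set a; b]>>| = (p ^ (3 * gamma))%N ->
  (1 <= delta <= gamma)%N ->
  let H := <<[set a ^+ (p ^ delta); b ^+ (p ^ delta); [~ a, b]]>> in
  let K1 := <<[set [~ a, b] ^+ (p ^ delta)]>> in
  let K2 := <<[set [~ a, b] ^+ (p ^ delta.-1)]>> in
  [/\ (rho < delta < gamma - rho)%N ->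
        H / K1 \isog C3 (p ^ (gamma - rho)) (p ^ (gamma - delta)) (p ^ rho),
      ~~ (rho < delta < gamma - rho)%N ->
        H / K1 \isog C3 (p ^ (gamma - delta)) (p ^ (gamma - delta)) (p ^ delta),
      (rho < delta < gamma - rho)%N ->
        H / K2 \isog C3 (p ^ (gamma - rho - 1)) (p ^ (gamma - delta)) (p ^ rho)
    & ~~ (rho < delta < gamma - rho)%N ->
        H / K2 \isog C3 (p ^ (gamma - delta)) (p ^ (gamma - delta)) (p ^ delta.-1)].
Proof.
move=> pr _ g0 rg cg cga cgb ag bg oG dd H K1 K2.
have d1 : (0 < delta)%N by case/andP: dd.
have [A B] := main_e pr g0 rg cg cga cgb ag bg oG dd (leqnn delta) (leqnSn delta).
have [C D] := main_e pr g0 rg cg cga cgb ag bg oG dd (leq_pred delta)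
  (eq_leq (esym (prednK d1))).
rewrite subnn subn0 in A.
rewrite (sub_pred1 d1) in C.
by split.
Qed.
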